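(* Let $S$ be a left Ore set of a ring $R$. Then $S_c=\max(S)$, where $S_c:=\{s\in S:\ker(s\cdot)=\mathrm{ass}(S)\}$ is the core of $S$ and $\max(S):=\{s\in S:\ker(s\cdot)\text{ is a maximal element of the poset }(\{\ker(t\cdot):t\in S\},\subseteq)\}$.
   Context: All rings are associative with $1$. A multiplicative subset $S$ of $R$ ($1\in S$, $0\notin S$, closed under multiplication) is a left Ore set if $Sr\cap Rs\neq\emptyset$ for all $r\in R$, $s\in S$; for it, $\mathrm{ass}(S):=\{r\in R: sr=0\text{ for some } s\in S\}$. For $s\in R$, $\ker(s\cdot):=\{r\in R: sr=0\}$ is the kernel of left multiplication by $s$. *)

(* Defs.v *)
From HB Require Import structures.
From mathcomp Require Import all_boot all_algebra.
Set Implicit Arguments. Unset Strict Implicit. Unset Printing Implicit Defensive.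
Import GRing.Theory.
Local Open Scope ring_scope.

(* Subsets of R are predicates R -> Prop (R need not be finite). *)
Section OreDefs.
Variable R : nzRingType.

Definition mult_subset (S : R -> Prop) : Prop :=
  [/\ S 1, ~ S 0 & forall a b, S a -> S b -> S (a * b)].

Definition left_Ore (S : R -> Prop) : Prop :=
  mult_subset S /\
  forall (r s : R), S s -> exists s' r', S s' /\ s' * r = r' * s.

Definition ass (S : R -> Prop) (r : R) : Prop := exists s, S s /\ s * r = 0.

Definition kerl (s : R) (r : R) : Prop := s * r = 0.

Definition core (S : R -> Prop) (s : R) : Prop :=
  S s /\ forall r, kerl s r <-> ass S r.

Definition maxS (S : R -> Prop) (s : R) : Prop :=
  S s /\ forall t, S t ->
    (forall r, kerl s r -> kerl t r) -> (forall r, kerl t r -> kerl s r).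

End OreDefs.

(* Main.v *)
Require Import Defs.
From mathcomp Require Import all_boot all_algebra.
Import GRing.Theory.
Local Open Scope ring_scope.

Theorem proposition4p4 (R : nzRingType) (S : R -> Prop) :
  left_Ore S -> forall s : R, core S s <-> maxS S s.
Proof.
move=> [[S1 S0 SM] Ore] s; split.
- move=> [Ss H]; split => // t St sub r ktr.
  apply/H; exists t; split => //.
- move=> [Ss H]; split => // r; split.
  + move=> ksr; exists s; split => //.
  + move=> [t [St tr0]].
    have [s' [r' [Ss' E]]] := Ore s t St.
    have := H (s' * s) (SM _ _ Ss' Ss).
    apply.
    * move=> x; rewrite /kerl -mulrA => ->; by rewrite mulr0.
    * by rewrite /kerl E -mulrA tr0 mulr0.
Qed.
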